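(* There is an absolute constant $C>0$ such that the following holds. Let $\mathcal{T}=\sum_{l=1}^r\sigma^*_lU^*_l\otimes U^*_l\otimes U^*_l+\mathcal{E}$ with the noise $\mathcal{E}$ satisfying $\max_{ijk}|\mathcal{E}_{ijk}|\le\|\mathcal{E}\|_F/n^{1.5}$, and let $\nu_i,Z,p_{ijk},\widehat p_{ijk},\mathcal{W}_{ijk},\delta_{ijk}$ be as in the context. Let $U\in\mathbb{R}^{n\times r}$ be fixed (independent of $\delta$) with unit-norm columns and $|U_{il}|\le2\nu_i$ for all $i,l$, and fix $q\in[r]$ and $\epsilon\in(0,1]$. If $m\ge\frac{C}{\epsilon^2}nZ\log^2(n)$, then with probability at least $1-n^{-10}$, $$\Big\|\sum_{i=1}^n\sum_{j,k}\big(\delta_{ijk}\mathcal{W}_{ijk}-1\big)\mathcal{E}_{ijk}U_{jq}U_{kq}\,e_i\Big\|\le\epsilon\|\mathcal{E}\|_F .$$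
   Context: $U^*\in\mathbb{R}^{n\times r}$ has orthonormal columns, $\sigma^*_l>0$. $\nu_i=\frac{\|\mathcal{T}_{i,:,:}\|_F}{\|\mathcal{T}\|_F}+\frac1{\sqrt n}$ with $\|\mathcal{T}_{i,:,:}\|_F^2=\sum_{j,k}\mathcal{T}_{ijk}^2$; $Z=(\sum_i\nu_i^{3/2})^2$; $p_{ijk}=0.5\frac{\nu_i^{3/2}\nu_j^{3/2}+\nu_j^{3/2}\nu_k^{3/2}+\nu_k^{3/2}\nu_i^{3/2}}{3nZ}+0.5\frac{\mathcal{T}_{ijk}^2}{\|\mathcal{T}\|_F^2}$; $\widehat p_{ijk}=\min\{mp_{ijk},1\}$; $\mathcal{W}_{ijk}=1/\widehat p_{ijk}$; $\delta_{ijk}$ independent Bernoulli$(\widehat p_{ijk})$; $e_i$ the standard basis vectors; $\|\cdot\|_F$ the Frobenius norm. *)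

(* Defs.v *)
From Stdlib Require Import Reals Lra List ClassicalEpsilon.
Import ListNotations.
Open Scope R_scope.

(* sumR n f = f 0 + ... + f (n-1)  (indices are 0-based) *)
Fixpoint sumR (n : nat) (f : nat -> R) : R :=
  match n with O => 0 | S n' => sumR n' f + f n' end.

Definition sum3 (n : nat) (F : nat -> nat -> nat -> R) : R :=
  sumR n (fun i => sumR n (fun j => sumR n (fun k => F i j k))).

Definition frob (n : nat) (T : nat -> nat -> nat -> R) : R :=
  sqrt (sum3 n (fun i j k => T i j k ^ 2)).

Definition slice_norm (n : nat) (T : nat -> nat -> nat -> R) (i : nat) : R :=
  sqrt (sumR n (fun j => sumR n (fun k => T i j k ^ 2))).

Definition cp_tensor (r : nat) (sigma : nat -> R) (Us : nat -> nat -> R)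
  (E : nat -> nat -> nat -> R) : nat -> nat -> nat -> R :=
  fun i j k => sumR r (fun l => sigma l * Us i l * Us j l * Us k l) + E i j k.

Definition nu (n : nat) (T : nat -> nat -> nat -> R) (i : nat) : R :=
  slice_norm n T i / frob n T + / sqrt (INR n).

Definition Zc (n : nat) (T : nat -> nat -> nat -> R) : R :=
  (sumR n (fun i => Rpower (nu n T i) (3/2))) ^ 2.

Definition pr (n : nat) (T : nat -> nat -> nat -> R) (i j k : nat) : R :=
  let a := Rpower (nu n T i) (3/2) in
  let b := Rpower (nu n T j) (3/2) in
  let c := Rpower (nu n T k) (3/2) in
  0.5 * ((a * b + b * c + c * a) / (3 * INR n * Zc n T))
  + 0.5 * (T i j k ^ 2 / frob n T ^ 2).

Definition phat (n : nat) (m : R) (T : nat -> nat -> nat -> R) (i j k : nat) : R :=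
  Rmin (m * pr n T i j k) 1.

Definition Wt (n : nat) (m : R) (T : nat -> nat -> nat -> R) (i j k : nat) : R :=
  / phat n m T i j k.

Definition outcome := nat -> nat -> nat -> bool.

Definition b2R (b : bool) : R := if b then 1 else 0.

Definition upd (d : outcome) (i j k : nat) (b : bool) : outcome :=
  fun i' j' k' =>
    if (Nat.eqb i i' && Nat.eqb j j' && Nat.eqb k k')%bool then b else d i' j' k'.

Definition triples (n : nat) : list (nat * nat * nat) :=
  flat_map (fun i => flat_map (fun j => map (fun k => (i, j, k)) (seq 0 n)) (seq 0 n))
    (seq 0 n).

(* Expectation of F when delta_{ijk}, (i,j,k) in ts, are independent
   Bernoulli(p i j k) (entries not in ts are fixed by d). *)
Fixpoint expect (ts : list (nat * nat * nat)) (p : nat -> nat -> nat -> R)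
  (d : outcome) (F : outcome -> R) : R :=
  match ts with
  | [] => F d
  | (i, j, k) :: ts' =>
      p i j k * expect ts' p (upd d i j k true) F
      + (1 - p i j k) * expect ts' p (upd d i j k false) F
  end.

Definition indic (P : Prop) : R :=
  if excluded_middle_informative P then 1 else 0.

Definition prob (n : nat) (p : nat -> nat -> nat -> R) (P : outcome -> Prop) : R :=
  expect (triples n) p (fun _ _ _ => false) (fun d => indic (P d)).

Definition dev_norm (n : nat) (m : R) (T E : nat -> nat -> nat -> R)
  (U : nat -> nat -> R) (q : nat) (d : outcome) : R :=
  sqrt (sumR n (fun i =>
    (sumR n (fun j => sumR n (fun k =>
       (b2R (d i j k) * Wt n m T i j k - 1) * E i j k * U j q * U k q))) ^ 2)).

(* Main.v *)
Require Import Defs.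
From Stdlib Require Import Reals Lra Lia List ClassicalEpsilon Classical.
Import ListNotations.
Open Scope R_scope.

Definition ev (d : outcome) (t : nat * nat * nat) : bool :=
  match t with (i, j, k) => d i j k end.
Definition pt (p : nat -> nat -> nat -> R) (t : nat * nat * nat) : R :=
  match t with (i, j, k) => p i j k end.

Definition okp (p : nat -> nat -> nat -> R) := forall i j k, 0 <= p i j k <= 1.

Lemma expect_ext ts p : forall d F G, (forall d, F d = G d) ->
  expect ts p d F = expect ts p d G.
Proof.
  induction ts as [|[[i j] k] ts IH]; intros d F G H; simpl; auto.
  rewrite (IH _ F G H), (IH _ F G H); reflexivity.
Qed.

Lemma expect_le ts p : okp p -> forall d F G, (forall d, F d <= G d) ->
  expect ts p d F <= expect ts p d G.
Proof.
  intro Hp; induction ts as [|[[i j] k] ts IH]; intros d F G H; simpl; auto.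
  destruct (Hp i j k).
  apply Rplus_le_compat; apply Rmult_le_compat_l; try lra; apply IH; auto.
Qed.

Lemma expect_const ts p : forall d c, expect ts p d (fun _ => c) = c.
Proof.
  induction ts as [|[[i j] k] ts IH]; intros d c; simpl; auto.
  rewrite !IH; ring.
Qed.

Lemma expect_lin ts p : forall d a b F G,
  expect ts p d (fun d => a * F d + b * G d) = a * expect ts p d F + b * expect ts p d G.
Proof.
  induction ts as [|[[i j] k] ts IH]; intros d a b F G; simpl; auto.
  rewrite !IH; ring.
Qed.

Lemma expect_sum ts p : forall n d (F : nat -> outcome -> R),
  expect ts p d (fun d => sumR n (fun i => F i d)) = sumR n (fun i => expect ts p d (F i)).
Proof.
  induction n as [|n IH]; intros d F; simpl.
  - apply expect_const.
  - rewrite <- IH.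
    transitivity (expect ts p d (fun d0 => 1 * sumR n (fun i => F i d0) + 1 * F n d0)).
    apply expect_ext; intros; ring.
    rewrite expect_lin; ring.
Qed.

Lemma ev_upd d i j k b t : t <> (i, j, k) -> ev (upd d i j k b) t = ev d t.
Proof.
  destruct t as [[a c] e]; simpl; unfold upd; intro H.
  destruct (Nat.eqb i a) eqn:E1; destruct (Nat.eqb j c) eqn:E2; destruct (Nat.eqb k e) eqn:E3;
  simpl; auto.
  apply Nat.eqb_eq in E1, E2, E3; subst; congruence.
Qed.

Lemma ev_upd_same d i j k b : ev (upd d i j k b) (i, j, k) = b.
Proof. simpl; unfold upd; rewrite !Nat.eqb_refl; reflexivity. Qed.

Lemma expect_coord ts p t0 g : ~ In t0 ts -> forall d F,
  expect ts p d (fun d' => g (ev d' t0) * F d') = g (ev d t0) * expect ts p d F.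
Proof.
  induction ts as [|[[i j] k] ts IH]; intros Hn d F; simpl; auto.
  simpl in Hn.
  rewrite !IH by tauto.
  rewrite !ev_upd by (intro; apply Hn; left; congruence). ring.
Qed.

Fixpoint prodL (ts : list (nat * nat * nat)) (h : nat * nat * nat -> R) : R :=
  match ts with [] => 1 | t :: ts' => h t * prodL ts' h end.

Lemma expect_prod ts p (h : nat * nat * nat -> bool -> R) : NoDup ts -> forall d,
  expect ts p d (fun d' => prodL ts (fun t => h t (ev d' t))) =
  prodL ts (fun t => pt p t * h t true + (1 - pt p t) * h t false).
Proof.
  induction ts as [|[[i j] k] ts IH]; intros Hnd d; simpl; auto.
  inversion Hnd; subst.
  rewrite !(expect_coord ts p (i,j,k) (h (i,j,k))) by auto.
  rewrite !ev_upd_same, !IH by auto. ring.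
Qed.
Fixpoint prodR (n : nat) (f : nat -> R) : R :=
  match n with O => 1 | S n' => prodR n' f * f n' end.
Fixpoint prodS (l : list nat) (f : nat -> R) : R :=
  match l with [] => 1 | x :: l' => f x * prodS l' f end.

Lemma prodL_app l1 l2 g : prodL (l1 ++ l2) g = prodL l1 g * prodL l2 g.
Proof. induction l1; simpl; [ring| rewrite IHl1; ring]. Qed.
Lemma prodS_app l1 l2 g : prodS (l1 ++ l2) g = prodS l1 g * prodS l2 g.
Proof. induction l1; simpl; [ring| rewrite IHl1; ring]. Qed.
Lemma prodL_flat (F : nat -> list (nat*nat*nat)) l g :
  prodL (flat_map F l) g = prodS l (fun x => prodL (F x) g).
Proof. induction l; simpl; auto. rewrite prodL_app, IHl; reflexivity. Qed.
Lemma prodL_map (f : nat -> nat*nat*nat) l g :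
  prodL (map f l) g = prodS l (fun x => g (f x)).
Proof. induction l; simpl; auto. rewrite IHl; reflexivity. Qed.
Lemma prodS_seq n f : prodS (seq 0 n) f = prodR n f.
Proof. induction n; [reflexivity|]. rewrite seq_S, prodS_app, IHn; simpl; ring. Qed.
Lemma prodS_ext l f g : (forall x, f x = g x) -> prodS l f = prodS l g.
Proof. intro H; induction l; simpl; auto. rewrite H, IHl; auto. Qed.

Lemma prodL_triples n g : prodL (triples n) g =
  prodR n (fun i => prodR n (fun j => prodR n (fun k => g (i,j,k)))).
Proof.
  unfold triples. rewrite prodL_flat, <- prodS_seq. apply prodS_ext; intro i.
  rewrite prodL_flat, <- prodS_seq. apply prodS_ext; intro j.
  rewrite prodL_map, <- prodS_seq. reflexivity.
Qed.

Lemma NoDup_flat {B} (F : nat -> list B) l : NoDup l -> (forall x, NoDup (F x)) ->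
  (forall x y z, In z (F x) -> In z (F y) -> x = y) -> NoDup (flat_map F l).
Proof.
  intros Hl HF Hd; induction l as [|x l IH]; simpl. constructor.
  inversion Hl; subst. apply NoDup_app; auto.
  intros z Hz Hz'. apply in_flat_map in Hz' as [y [Hy Hzy]].
  rewrite (Hd x y z Hz Hzy) in *. contradiction.
Qed.

Lemma NoDup_triples n : NoDup (triples n).
Proof.
  unfold triples. apply NoDup_flat. apply seq_NoDup.
  - intro i. apply NoDup_flat. apply seq_NoDup.
    + intro j. apply NoDup_map_NoDup_ForallPairs. intros a b _ _ H; congruence. apply seq_NoDup.
    + intros a b z H1 H2. apply in_map_iff in H1 as [? [<- _]]. apply in_map_iff in H2 as [? [H _]]. congruence.
  - intros a b z H1 H2. apply in_flat_map in H1 as [? [_ H1]]. apply in_flat_map in H2 as [? [_ H2]].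
    apply in_map_iff in H1 as [? [<- _]]. apply in_map_iff in H2 as [? [H _]]. congruence.
Qed.

Lemma prodR_ext n f g : (forall i, (i < n)%nat -> f i = g i) -> prodR n f = prodR n g.
Proof. induction n; intro H; simpl; auto. rewrite IHn, H; auto. Qed.

Lemma prodR_one_at n i Q : (i < n)%nat -> prodR n (fun i' => if Nat.eqb i' i then Q else 1) = Q.
Proof.
  induction n; intro H. lia.
  simpl. destruct (Nat.eq_dec i n).
  - subst. rewrite Nat.eqb_refl. rewrite (prodR_ext n _ (fun _ => 1)).
    2:{ intros i' Hi'. destruct (Nat.eqb_spec i' n); [lia|auto]. }
    assert (prodR n (fun _ => 1) = 1) as ->; [|ring]. clear. induction n; simpl; [ring| rewrite IHn; ring].
  - rewrite IHn by lia. destruct (Nat.eqb_spec n i); [lia|ring].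
Qed.

Lemma exp_sumR n f : exp (sumR n f) = prodR n (fun i => exp (f i)).
Proof. induction n; simpl. apply exp_0. rewrite exp_plus, IHn; auto. Qed.

Lemma prodR_pos n f : (forall i, (i<n)%nat -> 0 <= f i) -> 0 <= prodR n f.
Proof. induction n; intro H; simpl. lra. apply Rmult_le_pos. apply IHn; intros; apply H; lia. apply H; lia. Qed.

Lemma prodR_le n f g : (forall i, (i<n)%nat -> 0 <= f i <= g i) -> prodR n f <= prodR n g.
Proof.
  induction n; intro H; simpl. lra.
  assert (0 <= prodR n f) by (apply prodR_pos; intros; apply H; lia).
  apply Rmult_le_compat; [exact H0 | apply H; lia | apply IHn; intros; apply H; lia | apply H; lia].
Qed.
Lemma Rabs_le_inv x b : Rabs x <= b -> -b <= x <= b.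
Proof. unfold Rabs; destruct (Rcase_abs x); lra. Qed.

Lemma exp_quad x : Rabs x <= /2 -> exp x <= 1 + x + 2*x^2.
Proof.
  intro H. apply Rabs_le_inv in H.
  assert (Hm : exp x * exp (-x) = 1) by (rewrite <- exp_plus; replace (x + -x) with 0 by ring; apply exp_0).
  assert (Hp := exp_pos x). assert (Hq := exp_pos (-x)).
  destruct (Rle_lt_dec 0 x).
  - pose proof (exp_ineq1_le (-x)).
    assert (1 <= (1 + x + 2*x^2) * exp (-x)).
    { apply Rle_trans with ((1 + x + 2*x^2) * (1 - x)). nra.
      apply Rmult_le_compat_l; nra. }
    nra.
  - pose proof (exp_ineq1_le (-x)).
    pose proof (exp_ineq1_le x).
    (* exp x = 1/exp(-x) with exp(-x) >= 1 - x *)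
    assert (1 <= (1 + x + 2*x^2) * exp (-x)).
    { apply Rle_trans with ((1 + x + 2*x^2) * (1 - x)). nra.
      apply Rmult_le_compat_l; nra. }
    nra.
Qed.

Lemma one_le_exp u : 0 <= u -> 1 <= exp u.
Proof. intro; pose proof (exp_ineq1_le u); lra. Qed.

Lemma mgf p q s : 0 < q -> p = Rmin q 1 -> Rabs s <= q/2 ->
  p * exp (s * (b2R true * /p - 1)) + (1-p) * exp (s * (b2R false * /p - 1)) <= exp (2*s^2/q).
Proof.
  intros Hq Hpq Hs. simpl b2R.
  destruct (Rle_lt_dec 1 q).
  - rewrite Rmin_right in Hpq by lra. subst p.
    replace (s * (1 * / 1 - 1)) with 0 by field. rewrite exp_0.
    replace ((1 - 1) * exp (s * (0 * / 1 - 1))) with 0 by ring.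
    apply Rle_trans with 1. lra. apply one_le_exp.
    apply Rmult_le_pos. nra. left; apply Rinv_0_lt_compat; lra.
  - rewrite Rmin_left in Hpq by lra. subst p.
    assert (Hs' := Hs). apply Rabs_le_inv in Hs'.
    set (w := / q). assert (Hw : q * w = 1) by (unfold w; field; lra).
    assert (Hw0 : 0 < w) by (unfold w; apply Rinv_0_lt_compat; lra).
    assert (E1 : exp (s * (1 * w - 1)) <= 1 + s * (1*w-1) + 2 * (s * (1*w-1))^2).
    { apply exp_quad. rewrite Rabs_mult.
      rewrite (Rabs_right (1*w-1)) by nra.
      apply Rle_trans with (q/2 * (1*w-1)). apply Rmult_le_compat_r; nra. nra. }
    assert (E2 : exp (s * (0 * w - 1)) <= 1 + s * (0*w-1) + 2 * (s * (0*w-1))^2).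
    { apply exp_quad. replace (s * (0*w-1)) with (-s) by ring. rewrite Rabs_Ropp. lra. }
    apply Rle_trans with (q * (1 + s * (1*w-1) + 2 * (s * (1*w-1))^2) + (1-q) * (1 + s * (0*w-1) + 2 * (s * (0*w-1))^2)).
    { apply Rplus_le_compat; apply Rmult_le_compat_l; lra. }
    replace (q * (1 + s * (1*w-1) + 2 * (s * (1*w-1))^2) + (1-q) * (1 + s * (0*w-1) + 2 * (s * (0*w-1))^2))
      with (1 + 2 * s^2 * w - 2 * s^2) by (replace w with (/q) by reflexivity; field; lra).
    apply Rle_trans with (1 + 2*s^2/q). unfold w; unfold Rdiv. nra.
    apply exp_ineq1_le.
Qed.

Lemma sumR_ext n f g : (forall i, (i < n)%nat -> f i = g i) -> sumR n f = sumR n g.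
Proof. induction n; intro H; simpl; auto. rewrite IHn, H; auto. Qed.
Lemma sumR_le n f g : (forall i, (i < n)%nat -> f i <= g i) -> sumR n f <= sumR n g.
Proof. induction n; intro H; simpl. lra. apply Rplus_le_compat. apply IHn; auto. apply H; lia. Qed.
Lemma sumR_nonneg n f : (forall i, (i < n)%nat -> 0 <= f i) -> 0 <= sumR n f.
Proof. induction n; intro H; simpl. lra. apply Rplus_le_le_0_compat. apply IHn; auto. apply H; lia. Qed.
Lemma sumR_term n f i : (forall i, (i < n)%nat -> 0 <= f i) -> (i < n)%nat -> f i <= sumR n f.
Proof.
  induction n; intros H Hi. lia. simpl. destruct (Nat.eq_dec i n).
  - subst. assert (0 <= sumR n f) by (apply sumR_nonneg; intros; apply H; lia). lra.
  -  apply Rle_trans with (sumR n f). apply IHn; [intros; apply H; lia| lia].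
    assert (0 <= f n) by (apply H; lia). lra.
Qed.
Lemma sumR_const n c : sumR n (fun _ => c) = INR n * c.
Proof. induction n; simpl. ring. rewrite IHn. destruct n; simpl; ring. Qed.
Lemma sumR_scal n c f : c * sumR n f = sumR n (fun i => c * f i).
Proof. induction n; simpl. ring. rewrite <- IHn. ring. Qed.
Lemma prodR_ones n : prodR n (fun _ => 1) = 1.
Proof. induction n; simpl; [ring| rewrite IHn; ring]. Qed.

Definition vv (n : nat) (W E : nat -> nat -> nat -> R) (U : nat -> nat -> R) (q : nat) (d : outcome) (i : nat) : R :=
  sumR n (fun j => sumR n (fun k => (b2R (d i j k) * W i j k - 1) * E i j k * U j q * U k q)).

Definition hfun (W E : nat -> nat -> nat -> R) (U : nat -> nat -> R) (q : nat) c i (t : nat*nat*nat) (b : bool) : R :=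
  match t with (i', j, k) => if Nat.eqb i' i then
        exp (c * ((b2R b * W i' j k - 1) * E i' j k * U j q * U k q)) else 1 end.

Lemma exp_vv_prod n W E U q c i d : (i < n)%nat ->
  exp (c * vv n W E U q d i) = prodL (triples n) (fun t => hfun W E U q c i t (ev d t)).
Proof.
  intro Hi. rewrite prodL_triples. unfold hfun; simpl.
  rewrite (prodR_ext n _ (fun i' => if Nat.eqb i' i then
     prodR n (fun j => prodR n (fun k => exp (c * ((b2R (d i j k) * W i j k - 1) * E i j k * U j q * U k q)))) else 1)).
  2:{ intros i' _. destruct (Nat.eqb_spec i' i).
      - subst. reflexivity.
      - rewrite (prodR_ext n _ (fun _ => 1)). apply prodR_ones.
        intros; apply prodR_ones. }
  rewrite prodR_one_at by auto.
  unfold vv. rewrite sumR_scal, exp_sumR. apply prodR_ext; intros j _.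
  rewrite sumR_scal, exp_sumR. reflexivity.
Qed.

Lemma chern n p W E U q i c K d0 : okp p -> (i < n)%nat ->
  (forall j k, (j < n)%nat -> (k < n)%nat ->
     p i j k * exp (c * ((b2R true * W i j k - 1) * E i j k * U j q * U k q))
     + (1 - p i j k) * exp (c * ((b2R false * W i j k - 1) * E i j k * U j q * U k q)) <= exp K) ->
  expect (triples n) p d0 (fun d => exp (c * vv n W E U q d i)) <= exp (INR n * (INR n * K)).
Proof.
  intros Hp Hi HK.
  rewrite (expect_ext _ _ _ _ _ (fun d => exp_vv_prod n W E U q c i d Hi)).
  rewrite expect_prod by apply NoDup_triples.
  rewrite prodL_triples. unfold hfun; simpl.
  rewrite (prodR_ext n _ (fun i' => if Nat.eqb i' i then
     prodR n (fun j => prodR n (fun k => p i j k * exp (c * ((b2R true * W i j k - 1) * E i j k * U j q * U k q))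
     + (1 - p i j k) * exp (c * ((b2R false * W i j k - 1) * E i j k * U j q * U k q)))) else 1)).
  2:{ intros i' _. destruct (Nat.eqb_spec i' i).
      - subst. reflexivity.
      - rewrite (prodR_ext n _ (fun _ => 1)). apply prodR_ones.
        intros; rewrite (prodR_ext n _ (fun _ => 1)). apply prodR_ones. intros; ring. }
  rewrite prodR_one_at by auto.
  rewrite <- (sumR_const n K), <- sumR_const, exp_sumR.
  apply prodR_le; intros j Hj. split.
  - apply prodR_pos; intros k Hk. destruct (Hp i j k).
    pose proof (exp_pos (c * ((b2R true * W i j k - 1) * E i j k * U j q * U k q))).
    pose proof (exp_pos (c * ((b2R false * W i j k - 1) * E i j k * U j q * U k q))).
    apply Rplus_le_le_0_compat; apply Rmult_le_pos; lra.
  - rewrite exp_sumR. apply prodR_le; intros k Hk. split.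
    + destruct (Hp i j k).
      pose proof (exp_pos (c * ((b2R true * W i j k - 1) * E i j k * U j q * U k q))).
      pose proof (exp_pos (c * ((b2R false * W i j k - 1) * E i j k * U j q * U k q))).
      apply Rplus_le_le_0_compat; apply Rmult_le_pos; lra.
    + apply HK; auto.
Qed.
Lemma Rpower32 x : 0 < x -> Rpower x (3/2) = x * sqrt x.
Proof.
  intro H. replace (3/2) with (1 + /2) by field.
  rewrite Rpower_plus, Rpower_1, Rpower_sqrt; auto.
Qed.

Lemma termA x y sx sy N sN e Z m pr Ev Uj Uk :
  0 < x -> 0 < y -> sx * sx = x -> sy * sy = y -> 0 < sx -> 0 < sy ->
  0 < sN -> sN * sN = N -> / sN <= x -> / sN <= y -> 0 < Z -> 0 < m -> 0 <= e ->
  Rabs Ev <= e / (N * sN) -> Rabs Uj <= 2 * x -> Rabs Uk <= 2 * y ->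
  pr * (6 * N * Z) >= (x * sx) * (y * sy) ->
  Rabs (Ev * Uj * Uk) <= 24 * e * Z / m * (m * pr).
Proof.
  intros Hx Hy Hsx Hsy Hsx0 Hsy0 HsN HN Hxl Hyl HZ Hm He HE HU1 HU2 Hpr.
  assert (HN0 : 0 < N) by nra.
  rewrite !Rabs_mult.
  assert (Hxy : 1 <= sx * sy * sN).
  { assert (1 <= x * y * N).
    { apply Rle_trans with (/sN * /sN * N).
      - rewrite <- HN. right; field; lra.
      - apply Rmult_le_compat_r; [lra|]. apply Rmult_le_compat; try lra.
        left; apply Rinv_0_lt_compat; lra. left; apply Rinv_0_lt_compat; lra. }
    assert (0 < sx * sy * sN) by (repeat apply Rmult_lt_0_compat; lra).
    nra. }
  assert (H1 : Rabs Ev * Rabs Uj * Rabs Uk <= e / (N * sN) * (2*x) * (2*y)).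
  { apply Rmult_le_compat; try apply Rabs_pos. apply Rmult_le_pos; apply Rabs_pos.
    apply Rmult_le_compat; try apply Rabs_pos; auto. auto. }
  apply Rle_trans with (1 := H1).
  replace (24 * e * Z / m * (m * pr)) with (4 * e / N * (pr * (6 * N * Z))) by (field; lra).
  apply Rle_trans with (4 * e / N * ((x * sx) * (y * sy))).
  - replace (e / (N * sN) * (2 * x) * (2 * y)) with (4 * e / N * (x * y / sN)) by (field; lra).
    apply Rmult_le_compat_l. unfold Rdiv; apply Rmult_le_pos; [lra| left; apply Rinv_0_lt_compat; lra].
    apply Rle_trans with (x * y / sN * (sx * sy * sN)).
    + assert (0 <= x * y / sN) by (unfold Rdiv; apply Rmult_le_pos; [nra| left; apply Rinv_0_lt_compat; lra]). nra.
    + right; field; lra.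
  - apply Rmult_le_compat_l. unfold Rdiv; apply Rmult_le_pos; [lra| left; apply Rinv_0_lt_compat; lra]. lra.
Qed.

Lemma termB x y sx sy N sN e Z m pr Ev Uj Uk :
  0 < x -> 0 < y -> x <= 2 -> y <= 2 -> sx * sx = x -> sy * sy = y -> 0 < sx -> 0 < sy ->
  0 < sN -> sN * sN = N -> 0 < Z -> 0 < m -> 0 <= e ->
  Rabs Ev <= e / (N * sN) -> Rabs Uj <= 2 * x -> Rabs Uk <= 2 * y ->
  pr * (6 * N * Z) >= (x * sx) * (y * sy) ->
  (Ev * Uj * Uk) ^ 2 <= 384 * e^2 * Z / (m * N^2) * (m * pr).
Proof.
  intros Hx Hy Hx2 Hy2 Hsx Hsy Hsx0 Hsy0 HsN HN HZ Hm He HE HU1 HU2 Hpr.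
  assert (HN0 : 0 < N) by nra.
  assert (Hs2 : sx * sy <= 4) by nra.
  assert (H1 : Rabs (Ev * Uj * Uk) <= e / (N * sN) * (2*x) * (2*y)).
  { rewrite !Rabs_mult. apply Rmult_le_compat; try apply Rabs_pos. apply Rmult_le_pos; apply Rabs_pos.
    apply Rmult_le_compat; try apply Rabs_pos; auto. auto. }
  assert (H2 : (Ev * Uj * Uk) ^ 2 <= (e / (N * sN) * (2*x) * (2*y)) ^ 2).
  { rewrite <- (pow2_abs (Ev * Uj * Uk)). apply pow_incr. split; [apply Rabs_pos| exact H1]. }
  apply Rle_trans with (1 := H2).
  replace (384 * e^2 * Z / (m * N^2) * (m * pr)) with (64 * e^2 / (N^3) * (pr * (6 * N * Z))) by (field; lra).
  replace ((e / (N * sN) * (2*x) * (2*y)) ^ 2) with (16 * e^2 / N^3 * (x * y * (x * y))).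
  2:{ replace (N^3) with (N * N * (sN * sN)) by (rewrite HN; simpl; ring). field; lra. }
  assert (0 <= 16 * e^2 / N^3) by (unfold Rdiv; apply Rmult_le_pos; [nra| left; apply Rinv_0_lt_compat; apply pow_lt; lra]).
  apply Rle_trans with (16 * e^2 / N^3 * (4 * (x * sx) * (y * sy))).
  - apply Rmult_le_compat_l; auto. rewrite <- Hsx, <- Hsy.
    assert (0 < sx * sy) by nra.
    assert (sx*sx*(sy*sy)*(sx*sx*(sy*sy)) = (sx*sy)*(sx*sy)*(sx*sy)*(sx*sy)) by ring.
    assert (4 * (sx*sx*sx) * (sy*sy*sy) = 4 * ((sx*sy)*(sx*sy)*(sx*sy))) by ring.
    nra.
  - replace (64 * e ^ 2 / N ^ 3 * (pr * (6 * N * Z))) with (16 * e^2 / N^3 * (4 * (pr * (6 * N * Z)))) by (unfold Rdiv; ring).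
    apply Rmult_le_compat_l; auto. lra.
Qed.
Lemma half : 0.5 = /2. Proof. unfold Q2R; simpl. field. Qed.

Lemma frob_pos n T : frob n T <> 0 -> 0 < frob n T.
Proof. intro H; pose proof (sqrt_pos (sum3 n (fun i j k => T i j k ^ 2))); unfold frob in *; lra. Qed.

Lemma slice_le n T i : (i < n)%nat -> slice_norm n T i <= frob n T.
Proof.
  intro Hi. unfold slice_norm, frob, sum3. apply sqrt_le_1_alt.
  apply (sumR_term n (fun i => sumR n (fun j => sumR n (fun k => T i j k ^ 2)))); auto.
  intros; apply sumR_nonneg; intros; apply sumR_nonneg; intros. apply pow2_ge_0.
Qed.

Lemma isqrt_pos n : (1 <= n)%nat -> 0 < / sqrt (INR n) <= 1.
Proof.
  intro H. assert (1 <= INR n) by (apply (le_INR 1); auto).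
  assert (1 <= sqrt (INR n)) by (rewrite <- sqrt_1; apply sqrt_le_1_alt; auto).
  split. apply Rinv_0_lt_compat; lra.
  rewrite <- Rinv_1. apply Rinv_le_contravar; lra.
Qed.

Lemma nu_lb n T i : frob n T <> 0 -> / sqrt (INR n) <= nu n T i.
Proof.
  intro H. unfold nu. assert (0 <= slice_norm n T i / frob n T).
  { unfold Rdiv; apply Rmult_le_pos. apply sqrt_pos. left; apply Rinv_0_lt_compat, frob_pos; auto. }
  lra.
Qed.

Lemma nu_ub n T i : (1 <= n)%nat -> frob n T <> 0 -> (i < n)%nat -> nu n T i <= 2.
Proof.
  intros H1 H Hi. unfold nu. pose proof (isqrt_pos n H1).
  assert (slice_norm n T i / frob n T <= 1).
  { pose proof (frob_pos n T H). pose proof (slice_le n T i Hi).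
    apply (Rmult_le_reg_r (frob n T)); auto. unfold Rdiv; rewrite Rmult_assoc, Rinv_l; lra. }
  lra.
Qed.

Lemma Rpower_pos x y : 0 < Rpower x y.
Proof. unfold Rpower; apply exp_pos. Qed.

Lemma Zc_pos n T : (1 <= n)%nat -> 0 < Zc n T.
Proof.
  intro H. unfold Zc. destruct n. lia.
  assert (0 < sumR (S n) (fun i => Rpower (nu (S n) T i) (3/2))).
  { simpl. pose proof (Rpower_pos (nu (S n) T n) (3/2)).
    assert (0 <= sumR n (fun i => Rpower (nu (S n) T i) (3/2))) by
      (apply sumR_nonneg; intros; left; apply Rpower_pos). lra. }
  nra.
Qed.

Lemma pr_lb n T i j k : (1 <= n)%nat -> frob n T <> 0 ->
  pr n T i j k * (6 * INR n * Zc n T) >= Rpower (nu n T j) (3/2) * Rpower (nu n T k) (3/2).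
Proof.
  intros H1 H. unfold pr. rewrite half.
  set (a := Rpower (nu n T i) (3/2)). set (b := Rpower (nu n T j) (3/2)). set (c := Rpower (nu n T k) (3/2)).
  assert (0 < a) by apply Rpower_pos. assert (0 < b) by apply Rpower_pos. assert (0 < c) by apply Rpower_pos.
  assert (HZ := Zc_pos n T H1). assert (1 <= INR n) by (apply (le_INR 1); auto).
  assert (0 <= T i j k ^ 2 / frob n T ^ 2).
  { unfold Rdiv; apply Rmult_le_pos. apply pow2_ge_0. left; apply Rinv_0_lt_compat, pow_lt, frob_pos; auto. }
  assert (HD : 0 < 6 * INR n * Zc n T) by nra.
  rewrite Rmult_plus_distr_r.
  replace (/2 * ((a * b + b * c + c * a) / (3 * INR n * Zc n T)) * (6 * INR n * Zc n T))
    with (a * b + b * c + c * a) by (field; lra).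
  assert (0 <= /2 * (T i j k ^ 2 / frob n T ^ 2) * (6 * INR n * Zc n T)) by
    (apply Rmult_le_pos; lra).
  assert (0 < a * b) by (apply Rmult_lt_0_compat; lra). assert (0 < c * a) by (apply Rmult_lt_0_compat; lra).
  lra.
Qed.

Lemma pr_nonneg n T i j k : (1 <= n)%nat -> frob n T <> 0 -> 0 <= pr n T i j k.
Proof.
  intros H1 H. pose proof (pr_lb n T i j k H1 H).
  pose proof (Rpower_pos (nu n T j) (3/2)). pose proof (Rpower_pos (nu n T k) (3/2)).
  assert (HZ := Zc_pos n T H1). assert (1 <= INR n) by (apply (le_INR 1); auto).
  assert (0 < 6 * INR n * Zc n T) by nra.
  assert (0 < Rpower (nu n T j) (3/2) * Rpower (nu n T k) (3/2)) by (apply Rmult_lt_0_compat; auto).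
  destruct (Rle_lt_dec 0 (pr n T i j k)); auto.
  assert (pr n T i j k * (6 * INR n * Zc n T) < 0) by (apply Rmult_neg_pos; auto). lra.
Qed.
Lemma exp_le x y : x <= y -> exp x <= exp y.
Proof. intro H; destruct (Req_dec x y). subst; lra. left; apply exp_increasing; lra. Qed.

Lemma pr_pos n T i j k : (1 <= n)%nat -> frob n T <> 0 -> 0 < pr n T i j k.
Proof.
  intros H1 H. pose proof (pr_lb n T i j k H1 H).
  pose proof (Rpower_pos (nu n T j) (3/2)). pose proof (Rpower_pos (nu n T k) (3/2)).
  assert (HZ := Zc_pos n T H1). assert (1 <= INR n) by (apply (le_INR 1); auto).
  assert (0 < 6 * INR n * Zc n T) by nra.
  assert (0 < Rpower (nu n T j) (3/2) * Rpower (nu n T k) (3/2)) by (apply Rmult_lt_0_compat; auto).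
  destruct (Rle_lt_dec (pr n T i j k) 0); auto.
  assert (pr n T i j k * (6 * INR n * Zc n T) <= 0).
  { destruct r as [r|r]. left; apply Rmult_neg_pos; auto. rewrite r; lra. }
  lra.
Qed.

Lemma union_pt n (v : nat -> R) lam t B : 0 < lam -> 0 <= t -> 0 <= B ->
  INR n * t ^ 2 <= B ^ 2 ->
  indic (sqrt (sumR n (fun i => v i ^ 2)) <= B) >=
  1 * 1 + (-1) * sumR n (fun i => exp (-(lam*t)) * exp (lam * v i) + exp (-(lam*t)) * exp (-lam * v i)).
Proof.
  intros Hl Ht HB HnB.
  assert (Hnn : forall i, (i < n)%nat -> 0 <= exp (-(lam*t)) * exp (lam * v i) + exp (-(lam*t)) * exp (-lam * v i)).
  { intros. pose proof (exp_pos (-(lam*t))). pose proof (exp_pos (lam * v i)). pose proof (exp_pos (-lam * v i)).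
    nra. }
  unfold indic; destruct excluded_middle_informative as [h|h].
  - pose proof (sumR_nonneg _ _ Hnn). lra.
  - enough (1 <= sumR n (fun i => exp (-(lam*t)) * exp (lam * v i) + exp (-(lam*t)) * exp (-lam * v i))) by lra.
    destruct (classic (exists i, (i < n)%nat /\ (t <= v i \/ t <= - v i))) as [[i [Hi Hv]]|Hno].
    + apply Rle_trans with (2 := sumR_term _ _ i Hnn Hi).
      rewrite <- !exp_plus.
      pose proof (exp_pos (-(lam*t) + lam * v i)). pose proof (exp_pos (-(lam*t) + -lam * v i)).
      destruct Hv.
      * assert (1 <= exp (-(lam*t) + lam * v i)) by (apply one_le_exp; nra). lra.
      * assert (1 <= exp (-(lam*t) + -lam * v i)) by (apply one_le_exp; nra). lra.
    + exfalso. apply h.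
      assert (sumR n (fun i => v i ^ 2) <= B ^ 2).
      { apply Rle_trans with (sumR n (fun _ => t ^ 2)).
        - apply sumR_le. intros i Hi.
          assert (~ (t <= v i \/ t <= - v i)) by (intro; apply Hno; exists i; auto).
          assert (v i < t) by (destruct (Rle_lt_dec t (v i)); tauto).
          assert (- v i < t) by (destruct (Rle_lt_dec t (- v i)); tauto).
          nra.
        - rewrite sumR_const. auto. }
      rewrite <- (sqrt_pow2 B HB). apply sqrt_le_1_alt; auto.
Qed.

Lemma final_bound N L Q : 2 <= N -> L = ln N -> /2 < ln 2 -> ln 2 <= L -> 32 * L ^ 2 <= Q ->
  2 * N * exp (- Q) <= / N ^ 10.
Proof.
  intros HN HL Hl2 HLl HQ.
  assert (HL0 : /2 < L) by lra.
  assert (Q >= ln 2 + 11 * L) by nra.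
  assert (exp (- Q) <= exp (- (ln 2 + 11 * L))) by (apply exp_le; lra).
  assert (Hx : exp (ln 2 + 11 * L) = 2 * N ^ 11).
  { rewrite exp_plus, exp_ln by lra. subst L.
    replace (11 * ln N) with (ln (N ^ 11)) by (rewrite ln_pow by lra; simpl; ring).
    rewrite exp_ln. auto. apply pow_lt; lra. }
  assert (exp (- (ln 2 + 11 * L)) = / (2 * N ^ 11)).
  { rewrite <- Hx. rewrite exp_Ropp. auto. }
  assert (0 < N ^ 10) by (apply pow_lt; lra).
  apply Rle_trans with (2 * N * / (2 * N ^ 11)).
  - apply Rmult_le_compat_l; [lra|]. lra.
  - right. simpl. field. lra.
Qed.
Theorem mainTheorem10 :
  exists C : R, 0 < C /\
  forall (n r : nat) (sigma : nat -> R) (Us : nat -> nat -> R)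
         (E : nat -> nat -> nat -> R) (U : nat -> nat -> R)
         (q : nat) (eps m : R),
    (2 <= n)%nat ->
    (forall l l', (l < r)%nat -> (l' < r)%nat ->
        sumR n (fun i => Us i l * Us i l') = if Nat.eqb l l' then 1 else 0) ->
    (forall l, (l < r)%nat -> 0 < sigma l) ->
    frob n (cp_tensor r sigma Us E) <> 0 ->
    (forall i j k, (i < n)%nat -> (j < n)%nat -> (k < n)%nat ->
        Rabs (E i j k) <= frob n E / Rpower (INR n) (3/2)) ->
    (forall l, (l < r)%nat -> sumR n (fun i => U i l ^ 2) = 1) ->
    (forall i l, (i < n)%nat -> (l < r)%nat ->
        Rabs (U i l) <= 2 * nu n (cp_tensor r sigma Us E) i) ->
    (q < r)%nat ->
    0 < eps <= 1 ->
    m >= C / eps ^ 2 * INR n * Zc n (cp_tensor r sigma Us E) * (ln (INR n)) ^ 2 ->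
    prob n (phat n m (cp_tensor r sigma Us E))
      (fun d => dev_norm n m (cp_tensor r sigma Us E) E U q d <= eps * frob n E)
    >= 1 - / (INR n ^ 10).
Proof.
  exists 100000. split; [lra|].
  intros n r sigma Us E U q eps m Hn _ _ HT HE _ HU Hq Heps Hm.
  set (T := cp_tensor r sigma Us E) in *.
  assert (Hn1 : (1 <= n)%nat) by lia.
  assert (HN2 : 2 <= INR n) by (apply (le_INR 2); auto).
  assert (HZ := Zc_pos n T Hn1).
  assert (Hl2 := ln_lt_2).
  assert (Hln : ln 2 <= ln (INR n)).
  { destruct (Req_dec (INR n) 2) as [h|h]. rewrite h; lra. left; apply ln_increasing; lra. }
  assert (Hmpos : 0 < m).
  { assert (0 < 100000 / eps ^ 2 * INR n * Zc n T * ln (INR n) ^ 2); [|lra].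
    assert (0 < / eps ^ 2) by (apply Rinv_0_lt_compat; apply pow_lt; lra).
    assert (0 < ln (INR n) ^ 2) by (apply pow_lt; lra).
    unfold Rdiv. apply Rmult_lt_0_compat; [|auto]. apply Rmult_lt_0_compat; [|auto].
    apply Rmult_lt_0_compat; [|lra]. apply Rmult_lt_0_compat; lra. }
  assert (HN10 : 0 < / INR n ^ 10) by (apply Rinv_0_lt_compat, pow_lt; lra).
  set (e := frob n E) in *.
  assert (He0 : 0 <= e) by apply sqrt_pos.
  assert (Hok : okp (phat n m T)).
  { intros i j k. unfold phat. split. apply Rmin_glb. apply Rmult_le_pos; [lra| apply pr_nonneg; auto]. lra.
    apply Rmin_r. }
  unfold prob.
  destruct (Req_dec e 0) as [He | He].
  -
    assert (HE0 : forall i j k, (i < n)%nat -> (j < n)%nat -> (k < n)%nat -> E i j k = 0).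
    { intros i j k Hi Hj Hk. pose proof (HE i j k Hi Hj Hk) as H0. fold e in H0. rewrite He in H0.
      unfold Rdiv in H0. rewrite Rmult_0_l in H0.
      destruct (Req_dec (E i j k) 0) as [H1|H1]; auto. pose proof (Rabs_pos_lt _ H1). lra. }
    rewrite (expect_ext _ _ _ _ (fun _ => 1)). rewrite expect_const. lra.
    intro d. unfold indic; destruct excluded_middle_informative as [h|h]; auto.
    exfalso; apply h. unfold dev_norm.
    rewrite (sumR_ext n _ (fun _ => 0)).
    + rewrite sumR_const, Rmult_0_r, sqrt_0, He. lra.
    + intros i Hi. rewrite (sumR_ext n _ (fun _ => 0)). rewrite sumR_const. ring.
      intros j Hj. rewrite (sumR_ext n _ (fun _ => 0)). rewrite sumR_const. ring.
      intros k Hk. rewrite HE0; auto. ring.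
  - assert (He1 : 0 < e) by lra.
    set (N := INR n) in *. set (sN := sqrt N).
    set (Z := Zc n T) in *.
    assert (HsN : 0 < sN) by (apply sqrt_lt_R0; lra).
    assert (HsN2 : sN * sN = N) by (apply sqrt_sqrt; lra).
    assert (HsN1 : 1 <= sN) by nra.
    set (t := eps * e / sN). set (S := 384 * e^2 * Z / m). set (lam := t / (4 * S)).
    set (K := 2 * lam^2 * (384 * e^2 * Z / (m * N^2))).
    assert (Ht : 0 < t) by (unfold t; unfold Rdiv; apply Rmult_lt_0_compat; [nra| apply Rinv_0_lt_compat; lra]).
    assert (He2 : 0 < e^2) by (apply pow_lt; lra).
    assert (HS : 0 < S) by (unfold S; unfold Rdiv; apply Rmult_lt_0_compat; [apply Rmult_lt_0_compat; lra| apply Rinv_0_lt_compat; lra]).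
    assert (Hlam : 0 < lam) by (unfold lam; unfold Rdiv; apply Rmult_lt_0_compat; [lra| apply Rinv_0_lt_compat; lra]).
    assert (Hlc : lam * (24 * e * Z / m) = eps / (64 * sN)) by (unfold lam, t, S; field; repeat split; lra).
    assert (Hterm : forall c i j k, (i<n)%nat -> (j<n)%nat -> (k<n)%nat -> Rabs c = lam ->
       phat n m T i j k * exp (c * ((b2R true * Wt n m T i j k - 1) * E i j k * U j q * U k q))
       + (1 - phat n m T i j k) * exp (c * ((b2R false * Wt n m T i j k - 1) * E i j k * U j q * U k q)) <= exp K).
    { intros c i j k Hi Hj Hk Hc. set (a := E i j k * U j q * U k q).
      replace (c * ((b2R true * Wt n m T i j k - 1) * E i j k * U j q * U k q))
        with ((c*a) * (b2R true * / phat n m T i j k - 1)) by (unfold a, Wt; ring).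
      replace (c * ((b2R false * Wt n m T i j k - 1) * E i j k * U j q * U k q))
        with ((c*a) * (b2R false * / phat n m T i j k - 1)) by (unfold a, Wt; ring).
      assert (Hpr := pr_pos n T i j k Hn1 HT).
      assert (Hmpr : 0 < m * pr n T i j k) by (apply Rmult_lt_0_compat; lra).
      assert (Hxl := nu_lb n T j HT). assert (Hyl := nu_lb n T k HT).
      assert (Hxu := nu_ub n T j Hn1 HT Hj). assert (Hyu := nu_ub n T k Hn1 HT Hk).
      assert (Hi0 := isqrt_pos n Hn1).
      assert (Hx0 : 0 < nu n T j) by lra. assert (Hy0 : 0 < nu n T k) by lra.
      assert (Hprl := pr_lb n T i j k Hn1 HT).
      rewrite !Rpower32 in Hprl by lra.
      assert (HE' : Rabs (E i j k) <= e / (N * sN)).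
      { rewrite <- Rpower32 by lra. apply HE; auto. }
      assert (HA : Rabs a <= 24 * e * Z / m * (m * pr n T i j k)).
      { unfold a. apply (termA (nu n T j) (nu n T k) (sqrt (nu n T j)) (sqrt (nu n T k)) N sN);
          try apply sqrt_sqrt; try apply sqrt_lt_R0; try lra; try apply HU; auto. }
      assert (HB : a ^ 2 <= 384 * e^2 * Z / (m * N^2) * (m * pr n T i j k)).
      { unfold a. apply (termB (nu n T j) (nu n T k) (sqrt (nu n T j)) (sqrt (nu n T k)) N sN);
          try apply sqrt_sqrt; try apply sqrt_lt_R0; try lra; try apply HU; auto. }
      apply Rle_trans with (exp (2 * (c*a)^2 / (m * pr n T i j k))).
      - apply mgf; auto.
        rewrite Rabs_mult, Hc.
        apply Rle_trans with (lam * (24 * e * Z / m * (m * pr n T i j k))).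
        apply Rmult_le_compat_l; lra.
        rewrite <- Rmult_assoc, Hlc.
        assert (eps / (64 * sN) <= /2).
        { apply (Rmult_le_reg_r (64 * sN)). lra. unfold Rdiv. rewrite Rmult_assoc, Rinv_l by lra. nra. }
        nra.
      - apply exp_le. unfold K.
        assert (Hc2 : c ^ 2 = lam ^ 2) by (rewrite <- Hc, pow2_abs; auto).
        replace (2 * (c * a) ^ 2 / (m * pr n T i j k)) with (2 * c^2 * (a^2 / (m * pr n T i j k))) by (field; lra).
        rewrite Hc2. apply Rmult_le_compat_l. nra.
        apply (Rmult_le_reg_r (m * pr n T i j k)). auto.
        unfold Rdiv at 1. rewrite Rmult_assoc, Rinv_l by lra. lra. }
    assert (Hch : forall c i, (i<n)%nat -> Rabs c = lam ->
      expect (triples n) (phat n m T) (fun _ _ _ => false) (fun d => exp (c * vv n (Wt n m T) E U q d i))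
        <= exp (N * (N * K))).
    { intros c i Hi Hc. apply chern; auto. }
    assert (Hfin : 2 * N * exp (- (lam * t - N * (N * K))) <= / N ^ 10).
    { apply (final_bound N (ln N)); auto.
      assert (Ht2 : t * t = eps^2 * e^2 / N).
      { unfold t. rewrite <- HsN2. field. lra. }
      replace (lam * t - N * (N * K)) with (t * t * m / (3072 * e^2 * Z)) by (unfold K, lam, S; field; repeat split; lra).
      rewrite Ht2.
      apply (Rmult_le_reg_r (3072 * N * Z)). nra.
      replace (eps ^ 2 * e ^ 2 / N * m / (3072 * e ^ 2 * Z) * (3072 * N * Z)) with (eps^2 * m) by (field; repeat split; lra).
      assert (Hm2 : eps ^ 2 * m >= 100000 * N * Z * ln N ^ 2).
      { assert (0 < eps ^ 2) by (apply pow_lt; lra).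
        apply Rle_ge. apply Rle_trans with (eps ^ 2 * (100000 / eps ^ 2 * N * Z * ln N ^ 2)).
        right; field; lra. apply Rmult_le_compat_l; lra. }
      assert (0 <= ln N ^ 2) by apply pow2_ge_0.
      assert (0 <= N * Z * ln N ^ 2) by (apply Rmult_le_pos; [nra|auto]).
      nra. }
    apply Rle_ge.
    apply Rle_trans with (expect (triples n) (phat n m T) (fun _ _ _ => false) (fun d =>
      1 * 1 + (-1) * sumR n (fun i => exp (-(lam*t)) * exp (lam * vv n (Wt n m T) E U q d i)
        + exp (-(lam*t)) * exp (-lam * vv n (Wt n m T) E U q d i)))).
    + rewrite (expect_lin _ _ _ 1 (-1) (fun _ => 1)).
      rewrite expect_const, expect_sum.
      assert (sumR n (fun i => expect (triples n) (phat n m T) (fun _ _ _ => false)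
        (fun d => exp (-(lam*t)) * exp (lam * vv n (Wt n m T) E U q d i)
        + exp (-(lam*t)) * exp (-lam * vv n (Wt n m T) E U q d i)))
        <= sumR n (fun _ => 2 * (exp (-(lam*t)) * exp (N * (N * K))))).
      { apply sumR_le. intros i Hi. rewrite expect_lin.
        pose proof (Hch lam i Hi (Rabs_pos_eq _ (Rlt_le _ _ Hlam))).
        assert (Rabs (-lam) = lam) by (rewrite Rabs_Ropp; apply Rabs_pos_eq; lra).
        pose proof (Hch (-lam) i Hi H0). pose proof (exp_pos (-(lam*t))). nra. }
      rewrite sumR_const in H.
      replace (exp (-(lam*t)) * exp (N * (N * K))) with (exp (- (lam * t - N * (N * K)))) in H
        by (rewrite <- exp_plus; f_equal; ring).
      change (INR n) with N in H. lra.
    + apply expect_le; auto. intro d. apply Rge_le.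
      unfold dev_norm.
      apply (union_pt n (fun i => vv n (Wt n m T) E U q d i)); try lra.
      * nra.
      * replace (t ^ 2) with (eps^2 * e^2 / N) by (unfold t; simpl; rewrite <- HsN2; field; lra).
        change (INR n) with N. right; field; lra.
Qed.
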